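(* The map $[0,\infty)\to\mathbb R$, $r\mapsto\sqrt{r\tanh(r)}$, is concave and possesses an extension $F:\mathbb R\to\mathbb R$ which is analytic, increasing and odd, such that $F'$ does not vanish on $\mathbb R$ and $F''$ vanishes only at the origin, where it has a simple zero. *)

(* Defs.v *)
From Stdlib Require Import Reals Lra.
From Coquelicot Require Import Coquelicot.
Open Scope R_scope.

Definition real_analytic (f : R -> R) : Prop :=
  forall x0 : R, exists (a : nat -> R) (delta : R), 0 < delta /\
    forall y : R, Rabs (y - x0) < delta -> is_pseries a (y - x0) (f y).

Definition concave_on (D : R -> Prop) (f : R -> R) : Prop :=
  forall x y t : R, D x -> D y -> 0 <= t <= 1 ->
    t * f x + (1 - t) * f y <= f (t * x + (1 - t) * y).

Definition g (r : R) : R := sqrt (r * tanh r).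

(* Main.v *)
Require Import Defs.
From Stdlib Require Import Reals Lra Lia Psatz.
From Coquelicot Require Import Coquelicot.
Open Scope R_scope.

Definition tl (a : nat -> R) (k : nat) : R := match k with O => 0 | S _ => a k end.

Lemma split0 a g n : sum_f_R0 (fun k => a k * g k) n =
  a 0%nat * g 0%nat + sum_f_R0 (fun k => tl a k * g k) n.
Proof. induction n; simpl; [ring | rewrite IHn; ring]. Qed.

Lemma sum_rev f n : sum_f_R0 (fun k => f (n - k)%nat) n = sum_f_R0 f n.
Proof.
  induction n. reflexivity.
  rewrite decomp_sum by lia. simpl pred.
  replace (S n - 0)%nat with (S n) by lia.
  rewrite (sum_eq _ (fun i => f (n - i)%nat)) by (intros; f_equal; lia).
  rewrite IHn. simpl. ring.
Qed.

Lemma splitn a g n : sum_f_R0 (fun k => g k * a (n - k)%nat) n =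
  g n * a 0%nat + sum_f_R0 (fun k => g k * tl a (n - k)%nat) n.
Proof.
  transitivity (sum_f_R0 (fun k => a k * g (n - k)%nat) n).
  { rewrite <- (sum_rev (fun k => a k * g (n - k)%nat)).
    apply sum_eq. intros. replace (n - (n - i))%nat with i by lia. ring. }
  rewrite split0. replace (n - 0)%nat with n by lia. rewrite (Rmult_comm (a 0%nat)). apply Rplus_eq_compat_l.
  rewrite <- (sum_rev (fun k => tl a k * g (n - k)%nat)).
  apply sum_eq. intros. replace (n - (n - i))%nat with i by lia. ring.
Qed.

Fixpoint srec (step : nat -> (nat -> R) -> R) (n : nat) : nat -> R :=
  match n with
  | O => fun _ => step O (fun _ => 0)
  | S m => fun k => if Nat.leb k m then srec step m k else step (S m) (srec step m)
  end.
Definition sfun step n := srec step n n.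

Definition stable (step : nat -> (nat -> R) -> R) :=
  forall n p q, (forall k, (k < n)%nat -> p k = q k) -> step n p = step n q.

Lemma srec_top step m : srec step (S m) (S m) = step (S m) (srec step m).
Proof.
  assert (H : Nat.leb (S m) m = false) by (apply Nat.leb_gt; lia).
  cbn [srec]. rewrite H. reflexivity.
Qed.

Lemma srec_ok step : stable step -> forall m k, (k <= m)%nat -> srec step m k = sfun step k.
Proof.
  intros Hs m. induction m; intros k Hk.
  - replace k with 0%nat by lia. reflexivity.
  - simpl. destruct (Nat.leb k m) eqn:E.
    + apply IHm. apply Nat.leb_le. exact E.
    + apply Nat.leb_gt in E. replace k with (S m) by lia. unfold sfun. rewrite srec_top. reflexivity.
Qed.

Lemma sfun_eq step : stable step -> forall n, sfun step n = step n (sfun step).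
Proof.
  intros Hs n. destruct n.
  - unfold sfun. simpl. apply Hs. intros; lia.
  - unfold sfun at 1. rewrite srec_top.
    apply Hs. intros k Hk. apply srec_ok; auto. lia.
Qed.
Definition anc (f : R -> R) (x0 : R) (a : nat -> R) := exists (M K : R),
  0 < K /\ (forall n, Rabs (a n) <= M * K ^ n) /\
  forall y, Rabs (y - x0) < / K -> f y = PSeries a (y - x0).
Definition an (f : R -> R) (x0 : R) := exists a, anc f x0 a.

Lemma bound_M a M K : (forall n, Rabs (a n) <= M * K ^ n) -> 0 <= M.
Proof. intros H. specialize (H 0%nat). simpl in H. pose proof (Rabs_pos (a 0%nat)). lra. Qed.

Lemma rad_bound a M K : 0 < K -> (forall n, Rabs (a n) <= M * K ^ n) ->
  forall x, Rabs x < / K -> Rbar_lt (Rabs x) (CV_radius a).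
Proof.
  intros HK Hb x Hx.
  pose proof (bound_M _ _ _ Hb) as HM.
  set (y := (Rabs x + / K) / 2).
  assert (H1 : Rabs x < y) by (unfold y; lra).
  assert (H2 : y < / K) by (unfold y; lra).
  assert (H0 : 0 <= y) by (unfold y; pose proof (Rabs_pos x); lra).
  assert (Hub : Rbar_le y (CV_radius a)).
  { destruct (CV_radius_bounded a) as [Hub _]. apply Hub. exists M. intro n.
    rewrite Rabs_mult, <- RPow_abs, (Rabs_pos_eq y H0).
    assert (HKy : 0 <= K * y <= 1).
    { split. apply Rmult_le_pos; lra.
      apply Rmult_lt_compat_l with (r := K) in H2; auto.
      rewrite Rinv_r in H2; lra. }
    apply Rle_trans with (M * K ^ n * y ^ n).
    apply Rmult_le_compat_r. apply pow_le; lra. apply Hb.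
    rewrite Rmult_assoc, <- Rpow_mult_distr.
    rewrite <- (Rmult_1_r M) at 2. apply Rmult_le_compat_l; auto.
    rewrite <- (pow1 n). apply pow_incr. lra. }
  destruct (CV_radius a) as [r| |]; simpl in *; try lra; auto.
Qed.

Lemma an_mk f x0 a M K d : 0 < K -> 0 < d -> (forall n, Rabs (a n) <= M * K ^ n) ->
  (forall y, Rabs (y - x0) < d -> f y = PSeries a (y - x0)) -> anc f x0 a.
Proof.
  intros HK Hd Hb He. pose proof (bound_M _ _ _ Hb) as HM.
  exists M, (K + / d). split. pose proof (Rinv_0_lt_compat d Hd). lra.
  split.
  - intro n. apply Rle_trans with (1 := Hb n). apply Rmult_le_compat_l; auto.
    apply pow_incr. pose proof (Rinv_0_lt_compat d Hd). lra.
  - intros y Hy. apply He. apply Rlt_le_trans with (1 := Hy).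
    rewrite <- (Rinv_inv d) at 2. apply Rinv_le_contravar.
    apply Rinv_0_lt_compat; auto. pose proof (Rinv_0_lt_compat d Hd). lra.
Qed.

Lemma an_ext f g x0 a d : 0 < d -> (forall y, Rabs (y - x0) < d -> f y = g y) -> anc f x0 a -> anc g x0 a.
Proof.
  intros Hd He [M [K [HK [Hb Hf]]]].
  apply an_mk with M K (Rmin d (/ K)); auto.
  apply Rmin_pos; auto. apply Rinv_0_lt_compat; auto.
  intros y Hy. rewrite <- He. apply Hf.
  apply Rlt_le_trans with (1 := Hy). apply Rmin_r.
  apply Rlt_le_trans with (1 := Hy). apply Rmin_l.
Qed.

Lemma an_real f : (forall x0, an f x0) -> forall x0 : R, exists (a : nat -> R) (delta : R), 0 < delta /\
    forall y : R, Rabs (y - x0) < delta -> is_pseries a (y - x0) (f y).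
Proof.
  intros H x0. destruct (H x0) as [a [M [K [HK [Hb Hf]]]]].
  exists a, (/ K). split. apply Rinv_0_lt_compat; auto.
  intros y Hy. rewrite Hf by auto. apply PSeries_correct. apply CV_radius_inside.
  apply rad_bound with M K; auto.
Qed.

Definition unitc (c : R) (n : nat) : R := match n with O => c | S _ => 0 end.

Lemma unitc_bound c n K : 0 < K -> Rabs (unitc c n) <= Rabs c * K ^ n.
Proof. intros HK. destruct n; simpl. lra. rewrite Rabs_R0. apply Rmult_le_pos. apply Rabs_pos.
  apply Rmult_le_pos. lra. apply pow_le; lra. Qed.

Lemma PSeries_unitc c h : PSeries (unitc c) h = c.
Proof.
  rewrite PSeries_decr_1.
  rewrite (PSeries_ext (PS_decr_1 (unitc c)) (fun _ => 0)) by reflexivity.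
  rewrite PSeries_const_0. simpl. ring.
  assert (Hp : 0 < Rabs h + 1) by (pose proof (Rabs_pos h); lra).
  apply CV_radius_inside. apply rad_bound with (Rabs c) (/ (Rabs h + 1)).
  apply Rinv_0_lt_compat; auto.
  intro n. apply unitc_bound. apply Rinv_0_lt_compat; auto.
  rewrite Rinv_inv. lra.
Qed.

Lemma an_const c x0 : anc (fun _ => c) x0 (unitc c).
Proof.
  apply an_mk with (Rabs c) 1 1; try lra. intro; apply unitc_bound; lra.
  intros y Hy. rewrite PSeries_unitc; auto.
Qed.

Definition idc (x0 : R) (n : nat) : R := match n with O => x0 | 1%nat => 1 | _ => 0 end.

Lemma an_id x0 : anc (fun y => y) x0 (idc x0).
Proof.
  assert (Hb : forall n, Rabs (idc x0 n) <= (Rabs x0 + 1) * 1 ^ n).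
  { intro n. rewrite pow1, Rmult_1_r. pose proof (Rabs_pos x0).
    destruct n as [|[|n]]; simpl; try rewrite Rabs_R1; try rewrite Rabs_R0; lra. }
  apply an_mk with (Rabs x0 + 1) 1 1; try lra; auto.
  intros y Hy. rewrite PSeries_decr_1.
  rewrite (PSeries_ext (PS_decr_1 (idc x0)) (unitc 1)).
  rewrite PSeries_unitc. simpl. ring.
  intros [|n]; reflexivity.
  apply CV_radius_inside. apply rad_bound with (Rabs x0 + 1) 1; auto; lra.
Qed.

Lemma an_plus f g x0 a b : anc f x0 a -> anc g x0 b -> anc (fun y => f y + g y) x0 (fun n => a n + b n).
Proof.
  intros [M1 [K1 [HK1 [Hb1 Hf]]]] [M2 [K2 [HK2 [Hb2 Hg]]]].
  pose proof (bound_M _ _ _ Hb1). pose proof (bound_M _ _ _ Hb2).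
  assert (HK : 0 < K1 + K2) by lra.
  assert (Hi1 : / (K1 + K2) <= / K1) by (apply Rinv_le_contravar; lra).
  assert (Hi2 : / (K1 + K2) <= / K2) by (apply Rinv_le_contravar; lra).
  apply an_mk with (M1 + M2) (K1 + K2) (/ (K1 + K2)); auto.
  apply Rinv_0_lt_compat; auto.
  - intro n. eapply Rle_trans. apply Rabs_triang.
    assert (K1 ^ n <= (K1 + K2) ^ n) by (apply pow_incr; lra).
    assert (K2 ^ n <= (K1 + K2) ^ n) by (apply pow_incr; lra).
    specialize (Hb1 n). specialize (Hb2 n).
    assert (M1 * K1 ^ n <= M1 * (K1 + K2) ^ n) by (apply Rmult_le_compat_l; auto).
    assert (M2 * K2 ^ n <= M2 * (K1 + K2) ^ n) by (apply Rmult_le_compat_l; auto).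
    lra.
  - intros y Hy. rewrite Hf, Hg by lra.
    rewrite <- PSeries_plus. apply PSeries_ext. reflexivity.
    apply CV_radius_inside. apply rad_bound with M1 K1; auto; lra.
    apply CV_radius_inside. apply rad_bound with M2 K2; auto; lra.
Qed.

Lemma INR_S_le_pow2 n : INR (S n) <= 2 ^ n.
Proof.
  induction n. simpl. lra.
  rewrite S_INR. change (2 ^ S n) with (2 * 2 ^ n). pose proof (pow_R1_Rle 2 n). lra.
Qed.

Lemma an_mult f g x0 a b : anc f x0 a -> anc g x0 b -> anc (fun y => f y * g y) x0 (PS_mult a b).
Proof.
  intros [M1 [K1 [HK1 [Hb1 Hf]]]] [M2 [K2 [HK2 [Hb2 Hg]]]].
  pose proof (bound_M _ _ _ Hb1). pose proof (bound_M _ _ _ Hb2).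
  set (K := K1 + K2).
  assert (HK : 0 < K) by (unfold K; lra).
  assert (Hi1 : / (2 * K) <= / K1) by (apply Rinv_le_contravar; unfold K; lra).
  assert (Hi2 : / (2 * K) <= / K2) by (apply Rinv_le_contravar; unfold K; lra).
  apply an_mk with (M1 * M2) (2 * K) (/ (2 * K)); try lra.
  apply Rinv_0_lt_compat; lra.
  - intro n. unfold PS_mult. eapply Rle_trans. apply sum_f_R0_triangle.
    apply Rle_trans with (sum_f_R0 (fun _ => M1 * M2 * K ^ n) n).
    + apply sum_Rle. intros k Hk. rewrite Rabs_mult.
      replace (M1 * M2 * K ^ n) with ((M1 * K ^ k) * (M2 * K ^ (n - k))).
      apply Rmult_le_compat; try apply Rabs_pos.
      eapply Rle_trans. apply Hb1. apply Rmult_le_compat_l; auto. apply pow_incr. unfold K; lra.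
      eapply Rle_trans. apply Hb2. apply Rmult_le_compat_l; auto. apply pow_incr. unfold K; lra.
      assert (HKn : K ^ n = K ^ k * K ^ (n - k)) by (rewrite <- pow_add; f_equal; lia).
      rewrite HKn; ring.
    + rewrite sum_cte. rewrite Rpow_mult_distr.
      pose proof (INR_S_le_pow2 n).
      assert (0 <= M1 * M2 * K ^ n). apply Rmult_le_pos. apply Rmult_le_pos; auto. apply pow_le; lra.
      replace (M1 * M2 * (2 ^ n * K ^ n)) with ((M1 * M2 * K ^ n) * 2 ^ n) by ring.
      apply Rmult_le_compat_l; auto.
  - intros y Hy. rewrite Hf, Hg by lra. rewrite PSeries_mult. reflexivity.
    apply rad_bound with M1 K1; auto; lra.
    apply rad_bound with M2 K2; auto; lra.
Qed.
Definition inv_step (a : nat -> R) (n : nat) (p : nat -> R) : R :=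
  match n with O => / a 0%nat
  | S _ => - / a 0%nat * sum_f_R0 (fun k => tl a k * p (n - k)%nat) n end.
Definition invc a := sfun (inv_step a).

Lemma inv_stable a : stable (inv_step a).
Proof.
  intros n p q H. destruct n. reflexivity.
  cbv beta iota delta [inv_step]. f_equal. apply sum_eq. intros k Hk.
  destruct k. simpl; ring. rewrite H. reflexivity. lia.
Qed.

Lemma invc_eq a n : invc a n = inv_step a n (invc a).
Proof. apply sfun_eq, inv_stable. Qed.

Lemma invc_prod a : a 0%nat <> 0 -> forall n, PS_mult a (invc a) n = unitc 1 n.
Proof.
  intros Ha n. destruct n.
  - unfold PS_mult. simpl. rewrite invc_eq. simpl. field. auto.
  - unfold PS_mult. rewrite (split0 a (fun k => invc a (S n - k)%nat)).
    replace (S n - 0)%nat with (S n) by lia.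
    rewrite (invc_eq a (S n)). cbv beta iota delta [inv_step].
    simpl unitc. field. auto.
Qed.

Lemma sum_tl_half n : sum_f_R0 (tl (fun k => (/2)^k)) n = 1 - (/2)^n.
Proof.
  induction n. simpl. ring.
  simpl sum_f_R0. rewrite IHn. simpl. field.
Qed.

Lemma pow_ge_base x k : 1 <= x -> (1 <= k)%nat -> x <= x ^ k.
Proof.
  intros Hx Hk. destruct k. lia. simpl.
  pose proof (pow_R1_Rle x k Hx).
  rewrite <- (Rmult_1_r x) at 1. apply Rmult_le_compat_l; lra.
Qed.

Lemma invc_bound a M K : 0 < K -> a 0%nat <> 0 -> (forall n, Rabs (a n) <= M * K ^ n) ->
  forall n, Rabs (invc a n) <= / Rabs (a 0%nat) * (2 * K * (1 + M / Rabs (a 0%nat))) ^ n.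
Proof.
  intros HK Ha Hb.
  pose proof (bound_M _ _ _ Hb) as HM.
  set (c := Rabs (a 0%nat)).
  assert (Hc : 0 < c) by (apply Rabs_pos_lt; auto).
  set (K' := 1 + M / c).
  assert (HK'1 : 1 <= K') by (unfold K'; assert (0 <= M / c) by (apply Rdiv_le_0_compat; lra); lra).
  set (L := 2 * K * K').
  assert (HL : 0 < L) by (unfold L; apply Rmult_lt_0_compat; lra).
  replace (2 * K * (1 + M / c)) with L by (unfold L, K'; ring).
  intro n. induction n as [n IH] using (well_founded_induction Wf_nat.lt_wf).
  destruct n.
  - rewrite invc_eq. simpl. rewrite Rabs_inv. fold c. lra.
  - rewrite invc_eq. cbv beta iota delta [inv_step].
    rewrite Rabs_mult, Rabs_Ropp, Rabs_inv. fold c.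
    rewrite <- (Rmult_1_r (/ c)) at 1.
    rewrite Rmult_assoc. apply Rmult_le_compat_l. left; apply Rinv_0_lt_compat; auto.
    rewrite Rmult_1_l.
    eapply Rle_trans. apply sum_f_R0_triangle.
    apply Rle_trans with (sum_f_R0 (fun k => L ^ (S n) * tl (fun k => (/2)^k) k) (S n)).
    + apply sum_Rle. intros k Hk. destruct k.
      * simpl. rewrite Rmult_0_l, Rabs_R0. lra.
      * cbv beta iota delta [tl]. rewrite Rabs_mult.
        assert (Hpow : L ^ S n * (/ 2) ^ S k = K ^ S k * K' ^ S k * L ^ (S n - S k)).
        { assert (E1 : L ^ S n = L ^ S k * L ^ (S n - S k)) by (rewrite <- pow_add; f_equal; lia).
          assert (EL : L ^ S k = 2 ^ S k * K ^ S k * K' ^ S k) by (unfold L; rewrite !Rpow_mult_distr; ring).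
          rewrite E1, EL.
          assert (E2 : 2 ^ S k * (/ 2) ^ S k = 1) by (rewrite <- Rpow_mult_distr, Rinv_r, pow1; lra).
          replace (2 ^ S k * K ^ S k * K' ^ S k * L ^ (S n - S k) * (/ 2) ^ S k)
            with ((2 ^ S k * (/ 2) ^ S k) * (K ^ S k * K' ^ S k * L ^ (S n - S k))) by ring.
          rewrite E2. ring. }
        rewrite Hpow.
        apply Rle_trans with ((M * K ^ S k) * (/ c * L ^ (S n - S k))).
        apply Rmult_le_compat; try apply Rabs_pos. apply Hb. apply IH. lia.
        assert (HMc : M / c <= K' ^ S k).
        { apply Rle_trans with K'. unfold K'; lra. apply pow_ge_base; auto; lia. }
        assert (0 <= K ^ S k * L ^ (S n - S k)) by (apply Rmult_le_pos; apply pow_le; lra).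
        replace (M * K ^ S k * (/ c * L ^ (S n - S k))) with ((M / c) * (K ^ S k * L ^ (S n - S k))) by (unfold Rdiv; ring).
        replace (K ^ S k * K' ^ S k * L ^ (S n - S k)) with (K' ^ S k * (K ^ S k * L ^ (S n - S k))) by ring.
        apply Rmult_le_compat_r; auto.
    + rewrite (sum_eq _ (fun k => tl (fun k => (/2)^k) k * L ^ (S n))) by (intros; ring).
      rewrite <- scal_sum. rewrite sum_tl_half.
      assert (0 < (/2) ^ S n) by (apply pow_lt; lra).
      assert (0 < L ^ S n) by (apply pow_lt; lra).
      nra.
Qed.
Lemma an_at a K f x0 : (forall y, Rabs (y - x0) < / K -> f y = PSeries a (y - x0)) -> 0 < K ->
  f x0 = a 0%nat.
Proof.
  intros Hf HK. rewrite Hf. replace (x0 - x0) with 0 by ring. apply PSeries_0.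
  replace (x0 - x0) with 0 by ring. rewrite Rabs_R0. apply Rinv_0_lt_compat; auto.
Qed.

Lemma an_inv f x0 a : anc f x0 a -> f x0 <> 0 -> anc (fun y => / f y) x0 (invc a).
Proof.
  intros [M [K [HK [Hb Hf]]]] Hx.
  assert (Ha0 : a 0%nat <> 0) by (rewrite <- (an_at a K f x0); auto).
  pose proof (invc_bound a M K HK Ha0 Hb) as Hib.
  set (c := Rabs (a 0%nat)) in *.
  assert (Hc : 0 < c) by (apply Rabs_pos_lt; auto).
  pose proof (bound_M _ _ _ Hb) as HM.
  set (L := 2 * K * (1 + M / c)) in *.
  assert (HL : 0 < L).
  { unfold L. apply Rmult_lt_0_compat. lra.
    assert (0 <= M / c) by (apply Rdiv_le_0_compat; lra). lra. }
  apply an_mk with (/ c) L (Rmin (/ K) (/ L)); auto.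
  apply Rmin_pos; apply Rinv_0_lt_compat; auto.
  intros y Hy.
  assert (H1 : Rabs (y - x0) < / K) by (eapply Rlt_le_trans; [apply Hy| apply Rmin_l]).
  assert (H2 : Rabs (y - x0) < / L) by (eapply Rlt_le_trans; [apply Hy| apply Rmin_r]).
  assert (E : PSeries a (y - x0) * PSeries (invc a) (y - x0) = 1).
  { rewrite <- PSeries_mult. rewrite (PSeries_ext _ (unitc 1)) by (apply invc_prod; auto).
    apply PSeries_unitc.
    apply rad_bound with M K; auto.
    apply rad_bound with (/ c) L; auto. }
  rewrite <- Hf in E by auto.
  assert (f y <> 0) by (intro Hz; rewrite Hz in E; lra).
  apply (Rmult_eq_reg_l (f y)); auto. rewrite E. field. auto.
Qed.

Definition sqrt_step (a : nat -> R) (n : nat) (p : nat -> R) : R :=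
  match n with O => sqrt (a 0%nat)
  | S _ => (a n - sum_f_R0 (fun k => tl p k * tl p (n - k)%nat) n) / (2 * sqrt (a 0%nat)) end.
Definition sqrtc a := sfun (sqrt_step a).

Lemma sqrt_stable a : stable (sqrt_step a).
Proof.
  intros n p q H. destruct n. reflexivity.
  cbv beta iota delta [sqrt_step]. f_equal. f_equal. apply sum_eq. intros k Hk.
  destruct k. simpl; ring.
  destruct (Nat.eq_dec (S k) (S n)) as [E|E].
  - rewrite E. replace (S n - S n)%nat with 0%nat by lia. simpl. ring.
  - replace (S n - S k)%nat with (S (n - S k)) by lia. simpl tl.
    rewrite !H by lia. reflexivity.
Qed.

Lemma sqrtc_eq a n : sqrtc a n = sqrt_step a n (sqrtc a).
Proof. apply sfun_eq, sqrt_stable. Qed.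

Lemma sqrtc_sq a : 0 < a 0%nat -> forall n, PS_mult (sqrtc a) (sqrtc a) n = a n.
Proof.
  intros Ha n. pose proof (sqrt_lt_R0 _ Ha) as Hs. destruct n.
  - unfold PS_mult. simpl. rewrite sqrtc_eq. simpl. apply sqrt_sqrt. lra.
  - unfold PS_mult. rewrite (split0 (sqrtc a) (fun k => sqrtc a (S n - k)%nat)).
    cbv beta. rewrite (splitn (sqrtc a) (tl (sqrtc a)) (S n)).
    replace (S n - 0)%nat with (S n) by lia.
    change (tl (sqrtc a) (S n)) with (sqrtc a (S n)).
    rewrite (sqrtc_eq a 0). rewrite (sqrtc_eq a (S n)). cbv beta iota delta [sqrt_step].
    field. lra.
Qed.
Definition w (n : nat) : R := / (INR (S n) ^ 2).

Lemma INR_S_ge1 n : 1 <= INR (S n).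
Proof. rewrite S_INR. pose proof (pos_INR n). lra. Qed.

Lemma w_pos n : 0 < w n.
Proof. unfold w. apply Rinv_0_lt_compat. pose proof (INR_S_ge1 n). apply pow_lt. lra. Qed.

Lemma w_le1 n : w n <= 1.
Proof.
  unfold w. pose proof (INR_S_ge1 n). rewrite <- Rinv_1. apply Rinv_le_contravar. lra.
  apply pow_R1_Rle; lra.
Qed.

Lemma sum_w n : sum_f_R0 w n <= 2 - / INR (S n).
Proof.
  induction n.
  - simpl. unfold w. simpl. lra.
  - simpl sum_f_R0. set (x := INR (S n)) in *.
    assert (Hx : 1 <= x) by apply INR_S_ge1.
    assert (E : INR (S (S n)) = x + 1) by (unfold x; rewrite (S_INR (S n)); ring).
    unfold w at 2. rewrite E.
    assert (K : / x - / (x + 1) - / ((x + 1) ^ 2) = / (x * (x + 1) ^ 2)) by (field; lra).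
    assert (0 < / (x * (x + 1) ^ 2)) by (apply Rinv_0_lt_compat; apply Rmult_lt_0_compat; [lra| apply pow_lt; lra]).
    lra.
Qed.

Lemma sq_le_pow4 n : INR (S n) ^ 2 <= 4 ^ n.
Proof.
  replace 4 with (2 ^ 2) by (simpl; ring). rewrite <- pow_mult. rewrite Nat.mul_comm, pow_mult.
  apply pow_incr. split. pose proof (INR_S_ge1 n); lra. apply INR_S_le_pow2.
Qed.

Lemma w_term p q : 0 < p -> 0 < q ->
  / (p ^ 2) * / (q ^ 2) <= 2 / ((p + q) ^ 2) * (/ (p ^ 2) + / (q ^ 2)).
Proof.
  intros Hp Hq.
  assert (K : 2 / ((p + q) ^ 2) * (/ (p ^ 2) + / (q ^ 2)) - / (p ^ 2) * / (q ^ 2)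
     = (p - q) ^ 2 * / ((p + q) ^ 2 * p ^ 2 * q ^ 2)) by (field; lra).
  assert (0 <= (p - q) ^ 2 * / ((p + q) ^ 2 * p ^ 2 * q ^ 2)).
  { apply Rmult_le_pos. apply pow2_ge_0. left; apply Rinv_0_lt_compat.
    apply Rmult_lt_0_compat; [apply Rmult_lt_0_compat|]; apply pow_lt; lra. }
  lra.
Qed.

Lemma conv_w n : sum_f_R0 (fun k => w k * w (n - k)%nat) n <= 8 * w n.
Proof.
  set (s := INR (S (S n))).
  assert (Hs : INR (S n) + 1 = s) by (unfold s; rewrite (S_INR (S n)); ring).
  apply Rle_trans with (sum_f_R0 (fun k => 2 / (s ^ 2) * (w k + w (n - k)%nat)) n).
  - apply sum_Rle. intros k Hk. unfold w.
    replace s with (INR (S k) + INR (S (n - k))).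
    apply w_term; pose proof (INR_S_ge1 k); pose proof (INR_S_ge1 (n - k)); lra.
    rewrite <- Hs. rewrite !S_INR, minus_INR by lia. ring.
  - rewrite (sum_eq _ (fun k => (w k + w (n - k)%nat) * (2 / s ^ 2))) by (intros; ring).
    rewrite <- scal_sum.
    assert (E : sum_f_R0 (fun k => w k + w (n - k)%nat) n = sum_f_R0 w n + sum_f_R0 w n).
    { rewrite sum_plus. rewrite (sum_rev w n). reflexivity. }
    rewrite E. pose proof (sum_w n). pose proof (INR_S_ge1 n).
    assert (0 < / INR (S n)) by (apply Rinv_0_lt_compat; lra).
    assert (H4 : 2 / s ^ 2 * (sum_f_R0 w n + sum_f_R0 w n) <= 8 / s ^ 2).
    { assert (0 < 2 / s ^ 2) by (unfold Rdiv; apply Rmult_lt_0_compat; [lra| apply Rinv_0_lt_compat, pow_lt; lra]).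
      replace (8 / s ^ 2) with (2 / s ^ 2 * 4) by (field; lra).
      apply Rmult_le_compat_l; lra. }
    eapply Rle_trans. apply H4. unfold w, Rdiv. apply Rmult_le_compat_l. lra.
    apply Rinv_le_contravar. apply pow_lt; lra. apply pow_incr; lra.
Qed.
Lemma sqrtc_bound a M K : 0 < a 0%nat -> 0 < K -> (forall n, Rabs (a n) <= M * K ^ n) ->
  forall n, Rabs (tl (sqrtc a) n) <=
    sqrt (a 0%nat) / 8 * (4 * K * (1 + 8 * M / (sqrt (a 0%nat)) ^ 2)) ^ n * w n.
Proof.
  intros Ha HK Hb.
  pose proof (bound_M _ _ _ Hb) as HM.
  set (be := sqrt (a 0%nat)).
  assert (Hbe : 0 < be) by (apply sqrt_lt_R0; auto).
  set (B := be / 8).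
  set (K' := 1 + 8 * M / be ^ 2).
  assert (HK'0 : 0 <= 8 * M / be ^ 2) by (apply Rdiv_le_0_compat; [lra| apply pow_lt; lra]).
  assert (HK'1 : 1 <= K') by (unfold K'; lra).
  set (L := 4 * K * K').
  assert (HL : 0 < L) by (unfold L; apply Rmult_lt_0_compat; lra).
  assert (HB : 0 < B) by (unfold B; lra).
  set (s := sqrtc a).
  intro n. induction n as [n IH] using (well_founded_induction Wf_nat.lt_wf).
  destruct n.
  - simpl tl. rewrite Rabs_R0. pose proof (w_pos 0). apply Rmult_le_pos; [apply Rmult_le_pos; [lra| apply pow_le; lra] | lra].
  - change (tl s (S n)) with (s (S n)). unfold s. rewrite sqrtc_eq. cbv beta iota delta [sqrt_step].
    fold s. fold be.
    set (C := sum_f_R0 (fun k => tl s k * tl s (S n - k)%nat) (S n)).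
    assert (HC : Rabs C <= B ^ 2 * L ^ S n * (8 * w (S n))).
    { unfold C. eapply Rle_trans. apply sum_f_R0_triangle.
      apply Rle_trans with (sum_f_R0 (fun k => (w k * w (S n - k)%nat) * (B ^ 2 * L ^ S n)) (S n)).
      - apply sum_Rle. intros k Hk.
        assert (0 <= w k * w (S n - k)%nat * (B ^ 2 * L ^ S n)).
        { apply Rmult_le_pos. apply Rmult_le_pos; left; apply w_pos.
          apply Rmult_le_pos; apply pow_le; lra. }
        destruct k. simpl tl. rewrite Rmult_0_l, Rabs_R0. auto.
        destruct (Nat.eq_dec (S k) (S n)) as [E|E].
        + rewrite E. replace (S n - S n)%nat with 0%nat by lia. simpl tl. rewrite Rmult_0_r, Rabs_R0.
          apply Rmult_le_pos; [apply Rmult_le_pos; left; apply w_pos| apply Rmult_le_pos; apply pow_le; lra].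
        + rewrite Rabs_mult.
          apply Rle_trans with ((B * L ^ S k * w (S k)) * (B * L ^ (S n - S k) * w (S n - S k)%nat)).
          apply Rmult_le_compat; try apply Rabs_pos. apply IH. lia. apply IH. lia.
          assert (EL : L ^ S n = L ^ S k * L ^ (S n - S k)) by (rewrite <- pow_add; f_equal; lia).
          rewrite EL. right. ring.
      - rewrite <- scal_sum.
        apply Rmult_le_compat_l. apply Rmult_le_pos; apply pow_le; lra. apply conv_w. }
    assert (HA : Rabs (a (S n)) <= be ^ 2 / 8 * L ^ S n * w (S n)).
    { set (q := INR (S (S n)) ^ 2).
      assert (Hq : 0 < q) by (unfold q; apply pow_lt; pose proof (INR_S_ge1 (S n)); lra).
      assert (Hwq : w (S n) = / q) by reflexivity.
      assert (Hq4 : q <= 4 ^ S n) by apply sq_le_pow4.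
      assert (HMK : M <= be ^ 2 / 8 * K' ^ S n).
      { assert (K' <= K' ^ S n) by (apply pow_ge_base; auto; lia).
        assert (Hbe2 : 0 < be ^ 2) by (apply pow_lt; lra).
        assert (M = be ^ 2 / 8 * (8 * M / be ^ 2)) by (field; lra).
        assert (be ^ 2 / 8 * (8 * M / be ^ 2) <= be ^ 2 / 8 * K') by (apply Rmult_le_compat_l; [lra| unfold K'; lra]).
        assert (be ^ 2 / 8 * K' <= be ^ 2 / 8 * K' ^ S n) by (apply Rmult_le_compat_l; lra).
        lra. }
      eapply Rle_trans. apply Hb. rewrite Hwq.
      assert (EL : L ^ S n = 4 ^ S n * K ^ S n * K' ^ S n) by (unfold L; rewrite !Rpow_mult_distr; ring).
      rewrite EL.
      assert (HKn : 0 < K ^ S n) by (apply pow_lt; lra).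
      assert (H4 : 0 < 4 ^ S n) by (apply pow_lt; lra).
      apply (Rmult_le_reg_r q); auto.
      replace (be ^ 2 / 8 * (4 ^ S n * K ^ S n * K' ^ S n) * / q * q) with
        ((be ^ 2 / 8 * K' ^ S n) * (K ^ S n * 4 ^ S n)) by (field; lra).
      apply Rle_trans with (M * (K ^ S n * 4 ^ S n)).
      rewrite Rmult_assoc. apply Rmult_le_compat_l; auto.
      apply Rmult_le_compat_l; lra.
      apply Rmult_le_compat_r; auto. apply Rmult_le_pos; lra. }
    unfold Rdiv. rewrite Rabs_mult. rewrite Rabs_inv. rewrite (Rabs_pos_eq (2 * be)) by lra.
    apply Rle_trans with ((Rabs (a (S n)) + Rabs C) * / (2 * be)).
    apply Rmult_le_compat_r. left; apply Rinv_0_lt_compat; lra.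
    unfold Rminus. eapply Rle_trans. apply Rabs_triang. rewrite Rabs_Ropp. lra.
    apply (Rmult_le_reg_r (2 * be)). lra.
    rewrite Rmult_assoc, Rinv_l, Rmult_1_r by lra.
    eapply Rle_trans. apply Rplus_le_compat. apply HA. apply HC.
    right. unfold B. field.
Qed.
Lemma an_sqrt f x0 a : anc f x0 a -> 0 < f x0 -> anc (fun y => sqrt (f y)) x0 (sqrtc a).
Proof.
  intros [M [K [HK [Hb Hf]]]] Hx.
  assert (Ha0 : 0 < a 0%nat) by (rewrite <- (an_at a K f x0); auto).
  pose proof (sqrtc_bound a M K Ha0 HK Hb) as Hsb.
  pose proof (bound_M _ _ _ Hb) as HM.
  set (be := sqrt (a 0%nat)) in *.
  assert (Hbe : 0 < be) by (apply sqrt_lt_R0; auto).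
  set (L := 4 * K * (1 + 8 * M / be ^ 2)) in *.
  assert (HL : 0 < L).
  { unfold L. apply Rmult_lt_0_compat. lra.
    assert (0 <= 8 * M / be ^ 2) by (apply Rdiv_le_0_compat; [lra| apply pow_lt; lra]). lra. }
  set (s := sqrtc a) in *.
  assert (Hs0 : s 0%nat = be) by (unfold s; rewrite sqrtc_eq; reflexivity).
  assert (Hb' : forall n, Rabs (s n) <= (be + be / 8) * L ^ n).
  { intro n. destruct n.
    - rewrite Hs0. simpl. rewrite Rabs_pos_eq; lra.
    - change (s (S n)) with (tl s (S n)). eapply Rle_trans. apply Hsb.
      pose proof (w_le1 (S n)). pose proof (w_pos (S n)).
      assert (0 < L ^ S n) by (apply pow_lt; lra).
      assert (be / 8 * L ^ S n * w (S n) <= be / 8 * L ^ S n * 1).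
      apply Rmult_le_compat_l. apply Rmult_le_pos; lra. auto.
      nra. }
  assert (Hrad0 : Rbar_lt (Rabs 0) (CV_radius s)).
  { apply rad_bound with (be + be / 8) L; auto. rewrite Rabs_R0. apply Rinv_0_lt_compat; auto. }
  pose proof (PSeries_continuity s 0 Hrad0) as Hcont.
  unfold continuity_pt, continue_in, limit1_in, limit_in in Hcont. simpl in Hcont.
  destruct (Hcont be Hbe) as [del [Hdel Hc]].
  apply an_mk with (be + be / 8) L (Rmin (Rmin (/ K) (/ L)) del); auto.
  apply Rmin_pos; auto. apply Rmin_pos; apply Rinv_0_lt_compat; auto.
  intros y Hy.
  assert (H1 : Rabs (y - x0) < / K).
  { eapply Rlt_le_trans. apply Hy. eapply Rle_trans; apply Rmin_l. }
  assert (H2 : Rabs (y - x0) < / L).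
  { eapply Rlt_le_trans. apply Hy. eapply Rle_trans. apply Rmin_l. apply Rmin_r. }
  assert (H3 : Rabs (y - x0) < del).
  { eapply Rlt_le_trans. apply Hy. apply Rmin_r. }
  assert (Hpos : 0 < PSeries s (y - x0)).
  { destruct (Req_dec (y - x0) 0) as [Hz|Hz].
    { rewrite Hz, PSeries_0, Hs0. auto. }
    assert (Hd : Rdist (PSeries s (y - x0)) (PSeries s 0) < be).
    { apply Hc. split. split. exact I. auto. unfold Rdist. rewrite Rminus_0_r. auto. }
    unfold Rdist in Hd. rewrite PSeries_0, Hs0 in Hd.
    apply Rabs_def2 in Hd. lra. }
  assert (E : f y = PSeries s (y - x0) * PSeries s (y - x0)).
  { rewrite Hf by auto. rewrite <- PSeries_mult. apply PSeries_ext.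
    intro n. symmetry. apply sqrtc_sq. auto.
    apply rad_bound with (be + be / 8) L; auto.
    apply rad_bound with (be + be / 8) L; auto. }
  rewrite E. apply sqrt_square. lra.
Qed.
Definition dco (n : nat) : R := 2 ^ n / INR (Factorial.fact n).
Definition eco (n : nat) : R := dco (S n).
Definition Es (y : R) : R := PSeries eco y.
Definition Qf (y : R) : R := Es y / (exp (2 * y) + 1).
Definition Fm (y : R) : R := y * sqrt (Qf y).

Lemma fact_pos n : 0 < INR (Factorial.fact n).
Proof. apply lt_0_INR. apply Factorial.lt_O_fact. Qed.

Lemma exp2_is y : is_pseries dco y (exp (2 * y)).
Proof.
  pose proof (is_exp_Reals (2 * y)) as H. unfold is_pseries in *.
  eapply is_series_ext; [|apply H]. intro n. rewrite !pow_n_pow.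
  unfold scal; simpl; unfold mult; simpl. unfold dco. rewrite Rpow_mult_distr.
  pose proof (fact_pos n). field. lra.
Qed.

Lemma dco_bound n : Rabs (dco n) <= 1 * 2 ^ n.
Proof.
  unfold dco. pose proof (fact_pos n). assert (0 < 2 ^ n) by (apply pow_lt; lra).
  rewrite Rabs_pos_eq. rewrite Rmult_1_l. unfold Rdiv.
  rewrite <- (Rmult_1_r (2 ^ n)) at 2. apply Rmult_le_compat_l. lra.
  rewrite <- Rinv_1. apply Rinv_le_contravar. lra.
  apply (le_INR 1). apply Factorial.lt_O_fact.
  unfold Rdiv. apply Rmult_le_pos. lra. left; apply Rinv_0_lt_compat; lra.
Qed.

Lemma eco_bound n : Rabs (eco n) <= 2 * 2 ^ n.
Proof. unfold eco. pose proof (dco_bound (S n)). simpl in H. lra. Qed.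

Lemma Es_eq y : y * Es y = exp (2 * y) - 1.
Proof.
  rewrite <- (is_pseries_unique _ _ _ (exp2_is y)).
  rewrite PSeries_decr_1. unfold Es. change (PSeries (PS_decr_1 dco) y) with (PSeries eco y).
  unfold dco at 1. simpl. field.
  eexists. apply exp2_is.
Qed.

Lemma Es_0 : Es 0 = 2.
Proof. unfold Es. rewrite PSeries_0. unfold eco, dco. simpl. field. Qed.

Lemma Es_pos y : 0 < Es y.
Proof.
  destruct (Rtotal_order y 0) as [H|[H|H]].
  - pose proof (Es_eq y). assert (exp (2 * y) < 1) by (rewrite <- exp_0; apply exp_increasing; lra). nra.
  - subst. rewrite Es_0. lra.
  - pose proof (Es_eq y). assert (1 < exp (2 * y)) by (rewrite <- exp_0; apply exp_increasing; lra). nra.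
Qed.

Lemma Qf_pos y : 0 < Qf y.
Proof.
  unfold Qf. pose proof (Es_pos y). pose proof (exp_pos (2 * y)).
  unfold Rdiv. apply Rmult_lt_0_compat; auto. apply Rinv_0_lt_compat. lra.
Qed.

Definition Tf (y : R) : R := (exp (2 * y) - 1) / (exp (2 * y) + 1).

Lemma tanh_Tf y : tanh y = Tf y.
Proof.
  unfold tanh, sinh, cosh, Tf. rewrite exp_Ropp.
  replace (2 * y) with (y + y) by ring. rewrite exp_plus.
  pose proof (exp_pos y).
  assert (0 < exp y * exp y) by (apply Rmult_lt_0_compat; lra).
  assert (0 < exp y + / exp y) by (pose proof (Rinv_0_lt_compat _ H); lra).
  field; repeat split; lra.
Qed.

Lemma Qf_tanh y : y <> 0 -> Qf y = tanh y / y.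
Proof.
  intros Hy. rewrite tanh_Tf. unfold Qf, Tf.
  pose proof (Es_eq y). pose proof (exp_pos (2 * y)).
  apply (Rmult_eq_reg_l y); auto. replace (y * (Es y / (exp (2 * y) + 1))) with ((y * Es y) / (exp (2 * y) + 1)) by (field; lra).
  rewrite H. field. lra.
Qed.

Lemma Qf_0 : Qf 0 = 1.
Proof. unfold Qf. rewrite Es_0. rewrite Rmult_0_r, exp_0. field. Qed.

Lemma Tf_odd y : Tf (- y) = - Tf y.
Proof.
  unfold Tf. replace (2 * - y) with (- (2 * y)) by ring. rewrite exp_Ropp.
  pose proof (exp_pos (2 * y)). field. lra.
Qed.

Lemma Qf_even y : Qf (- y) = Qf y.
Proof.
  destruct (Req_dec y 0) as [H|H]. subst. rewrite Ropp_0. reflexivity.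
  rewrite !Qf_tanh, !tanh_Tf, Tf_odd by lra. field. auto.
Qed.

Lemma Fm_odd x : Fm (- x) = - Fm x.
Proof. unfold Fm. rewrite Qf_even. ring. Qed.

Lemma Tf_Qf y : Tf y = y * Qf y.
Proof.
  destruct (Req_dec y 0) as [H|H].
  - subst. unfold Tf. rewrite Rmult_0_r, exp_0. field.
  - rewrite Qf_tanh by auto. rewrite tanh_Tf. field. auto.
Qed.

Lemma Fm_g r : 0 <= r -> Fm r = g r.
Proof.
  intros Hr. unfold g, Fm. rewrite tanh_Tf, Tf_Qf.
  replace (r * (r * Qf r)) with (r ^ 2 * Qf r) by ring.
  rewrite sqrt_mult_alt by (apply pow2_ge_0). rewrite sqrt_pow2 by auto. reflexivity.
Qed.

Lemma anc_coef_ext f x0 a b : anc f x0 a -> (forall n, a n = b n) -> anc f x0 b.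
Proof.
  intros [M [K [HK [Hb Hf]]]] E. exists M, K. split; auto. split.
  intro n. rewrite <- E. auto. intros y Hy. rewrite Hf by auto. apply PSeries_ext. auto.
Qed.

Lemma an_exp2 x0 : anc (fun y => exp (2 * y)) x0 (fun n => exp (2 * x0) * dco n).
Proof.
  pose proof (exp_pos (2 * x0)).
  apply an_mk with (exp (2 * x0)) 2 1; try lra.
  - intro n. rewrite Rabs_mult, Rabs_pos_eq by lra. apply Rmult_le_compat_l. lra.
    pose proof (dco_bound n). lra.
  - intros y _. replace (2 * y) with (2 * x0 + 2 * (y - x0)) by ring. rewrite exp_plus.
    rewrite <- (is_pseries_unique _ _ _ (exp2_is (y - x0))).
    rewrite <- PSeries_scal. apply PSeries_ext. reflexivity.
Qed.

Lemma an_Es x0 : an Es x0.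
Proof.
  destruct (Req_dec x0 0) as [H|H].
  - subst. exists eco. apply an_mk with 2 2 1; try lra. apply eco_bound.
    intros y _. rewrite Rminus_0_r. reflexivity.
  - eexists. eapply an_ext with (d := Rabs x0).
    apply Rabs_pos_lt; auto.
    2: { apply an_mult. apply an_plus. apply an_exp2. apply (an_const (-1)).
         apply an_inv. apply an_id. auto. }
    intros y Hy. cbv beta.
    assert (y <> 0) by (intro Hz; subst; rewrite Rminus_0_l, Rabs_Ropp in Hy; lra).
    apply (Rmult_eq_reg_l y); auto. rewrite Es_eq. field. auto.
Qed.

Lemma an_Qf x0 : an Qf x0.
Proof.
  destruct (an_Es x0) as [a Ha].
  eexists. eapply an_ext with (d := 1). lra.
  2: { apply an_mult. apply Ha. apply an_inv. apply an_plus. apply an_exp2. apply (an_const 1).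
       pose proof (exp_pos (2 * x0)). lra. }
  intros y _. reflexivity.
Qed.

Lemma an_Fm x0 : an Fm x0.
Proof.
  destruct (an_Qf x0) as [a Ha].
  eexists. eapply an_ext with (d := 1). lra.
  2: { apply an_mult. apply an_id. apply an_sqrt. apply Ha. apply Qf_pos. }
  intros y _. reflexivity.
Qed.

Lemma Fm_analytic : real_analytic Fm.
Proof. unfold real_analytic. apply an_real. apply an_Fm. Qed.
Definition Sf y := 1 - Tf y ^ 2.
Definition Pf y := y * Tf y.
Definition P1 y := Tf y + y * Sf y.
Definition P2 y := 2 * Sf y - 2 * y * Tf y * Sf y.

Lemma Tf_deriv y : is_derive Tf y (Sf y).
Proof.
  unfold Sf, Tf. pose proof (exp_pos (2 * y)).
  auto_derive. lra. field. lra.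
Qed.

Lemma Sf_deriv y : is_derive Sf y (-2 * Tf y * Sf y).
Proof.
  unfold Sf, Tf. pose proof (exp_pos (2 * y)).
  auto_derive. lra. field. lra.
Qed.

Lemma Pf_deriv y : is_derive Pf y (P1 y).
Proof.
  unfold Pf, P1, Sf, Tf. pose proof (exp_pos (2 * y)).
  auto_derive. lra. field. lra.
Qed.

Lemma P1_deriv y : is_derive P1 y (P2 y).
Proof.
  unfold P1, P2, Sf, Tf. pose proof (exp_pos (2 * y)).
  auto_derive. lra. field. lra.
Qed.
Definition G0 (e : R) (y : R) : R := e * sqrt (Pf y).
Definition G1 (e : R) (y : R) : R := e * (P1 y / (2 * sqrt (Pf y))).
Definition G2 (e : R) (y : R) : R :=
  e * ((P2 y * (2 * sqrt (Pf y)) - P1 y * (2 * (P1 y / (2 * sqrt (Pf y))))) / (2 * sqrt (Pf y)) ^ 2).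

Lemma G0_deriv e y : 0 < Pf y -> is_derive (G0 e) y (G1 e y).
Proof.
  intros H. unfold G0, G1. apply is_derive_scal. apply is_derive_sqrt. apply Pf_deriv. auto.
Qed.

Lemma G1_deriv e y : 0 < Pf y -> is_derive (G1 e) y (G2 e y).
Proof.
  intros H. unfold G1, G2. apply is_derive_scal. apply (is_derive_div P1 (fun t => 2 * sqrt (Pf t))).
  apply P1_deriv. apply (is_derive_scal (fun t => sqrt (Pf t))). apply is_derive_sqrt. apply Pf_deriv. auto.
  pose proof (sqrt_lt_R0 _ H). lra.
Qed.

Lemma Tf_bounds y : -1 < Tf y < 1.
Proof.
  unfold Tf. pose proof (exp_pos (2 * y)).
  split; apply (Rmult_lt_reg_r (exp (2 * y) + 1)); try lra;
  unfold Rdiv; rewrite Rmult_assoc, Rinv_l, Rmult_1_r; lra.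
Qed.

Lemma Sf_pos y : 0 < Sf y.
Proof. unfold Sf. pose proof (Tf_bounds y). nra. Qed.

Lemma Tf_sign y : 0 < y -> 0 < Tf y.
Proof.
  intros H. unfold Tf. pose proof (exp_pos (2 * y)).
  assert (1 < exp (2 * y)) by (rewrite <- exp_0; apply exp_increasing; lra).
  unfold Rdiv. apply Rmult_lt_0_compat. lra. apply Rinv_0_lt_compat; lra.
Qed.

Lemma Tf_sign_e e y : (e = 1 \/ e = -1) -> 0 < e * y -> 0 < e * Tf y.
Proof.
  intros [-> | ->] H.
  - rewrite Rmult_1_l in *. apply Tf_sign. auto.
  - replace (-1 * Tf y) with (Tf (- y)) by (rewrite Tf_odd; ring). apply Tf_sign. lra.
Qed.

Lemma Pf_pos e y : (e = 1 \/ e = -1) -> 0 < e * y -> 0 < Pf y.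
Proof.
  intros He H. pose proof (Tf_sign_e e y He H). unfold Pf.
  replace (y * Tf y) with ((e * y) * (e * Tf y)) by (destruct He as [-> | ->]; ring).
  apply Rmult_lt_0_compat; auto.
Qed.

Lemma G1_pos e y : (e = 1 \/ e = -1) -> 0 < e * y -> 0 < G1 e y.
Proof.
  intros He H. pose proof (Tf_sign_e e y He H). pose proof (Pf_pos e y He H).
  pose proof (Sf_pos y). pose proof (sqrt_lt_R0 _ H1).
  unfold G1, P1.
  replace (e * ((Tf y + y * Sf y) / (2 * sqrt (Pf y)))) with
    ((e * Tf y + (e * y) * Sf y) / (2 * sqrt (Pf y))) by (field; lra).
  unfold Rdiv. apply Rmult_lt_0_compat. nra. apply Rinv_0_lt_compat. lra.
Qed.

Lemma key_ineq y : y <> 0 -> 2 * Pf y * P2 y - P1 y ^ 2 < 0.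
Proof.
  intros Hy.
  assert (HT : Tf y <> 0).
  { destruct (Rtotal_order y 0) as [H|[H|H]]; [|contradiction|].
    - pose proof (Tf_sign (- y)). rewrite Tf_odd in H0. lra.
    - pose proof (Tf_sign y H). lra. }
  pose proof (Sf_pos y).
  unfold Pf, P2, P1.
  replace (2 * (y * Tf y) * (2 * Sf y - 2 * y * Tf y * Sf y) - (Tf y + y * Sf y) ^ 2)
    with (- ((Tf y - y * Sf y) ^ 2 + 4 * (y * Tf y) ^ 2 * Sf y)) by ring.
  assert (0 < (y * Tf y) ^ 2) by (assert (y * Tf y <> 0) by (apply Rmult_integral_contrapositive_currified; auto); simpl; rewrite Rmult_1_r; apply Rsqr_pos_lt; auto).
  pose proof (pow2_ge_0 (Tf y - y * Sf y)). nra.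
Qed.
Lemma G2_sign e y : (e = 1 \/ e = -1) -> 0 < e * y -> e * G2 e y < 0.
Proof.
  intros He H. pose proof (Pf_pos e y He H) as HP.
  assert (Hy : y <> 0) by (intro Hz; subst; rewrite Rmult_0_r in H; lra).
  pose proof (key_ineq y Hy) as Hk.
  unfold G2. set (s := sqrt (Pf y)) in *.
  assert (Hs : 0 < s) by (apply sqrt_lt_R0; auto).
  assert (Hss : Pf y = s * s) by (unfold s; rewrite sqrt_sqrt; lra).
  rewrite Hss in Hk.
  replace (e * (e * ((P2 y * (2 * s) - P1 y * (2 * (P1 y / (2 * s)))) / (2 * s) ^ 2)))
    with ((2 * (s * s) * P2 y - P1 y ^ 2) * / (4 * s ^ 3))
    by (destruct He as [-> | ->]; field; lra).
  assert (0 < / (4 * s ^ 3)) by (apply Rinv_0_lt_compat; apply Rmult_lt_0_compat; [lra| apply pow_lt; lra]).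
  nra.
Qed.

Lemma Fm_G0 e y : (e = 1 \/ e = -1) -> 0 < e * y -> Fm y = G0 e y.
Proof.
  intros He H. unfold Fm, G0, Pf. rewrite Tf_Qf.
  replace (y * (y * Qf y)) with ((e * y) ^ 2 * Qf y) by (destruct He as [-> | ->]; ring).
  rewrite sqrt_mult_alt by apply pow2_ge_0. rewrite sqrt_pow2 by lra.
  destruct He as [-> | ->]; ring.
Qed.

Lemma loc_pos e x y : (e = 1 \/ e = -1) -> 0 < e * x -> Rabs (y - x) < Rabs x -> 0 < e * y.
Proof.
  intros He Hx Hy. apply Rabs_def2 in Hy.
  destruct He as [-> | ->].
  - rewrite Rabs_pos_eq in Hy; lra.
  - rewrite Rabs_left in Hy; lra.
Qed.

Lemma loc_ball x d (P : R -> Prop) : 0 < d -> (forall y, Rabs (y - x) < d -> P y) -> locally x P.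
Proof. intros Hd HP. exists (mkposreal d Hd). intros y Hy. apply HP. exact Hy. Qed.

Lemma Rabs_pos_e e x : (e = 1 \/ e = -1) -> 0 < e * x -> 0 < Rabs x.
Proof. intros [-> | ->] H; apply Rabs_pos_lt; lra. Qed.

Lemma Fm_nz x : x <> 0 -> exists e, (e = 1 \/ e = -1) /\ 0 < e * x /\
  (forall y, Rabs (y - x) < Rabs x -> is_derive Fm y (G1 e y) /\ Derive Fm y = G1 e y) /\
  is_derive (Derive Fm) x (G2 e x).
Proof.
  intros Hx.
  assert (He0 : exists e, (e = 1 \/ e = -1) /\ 0 < e * x).
  { destruct (Rlt_dec 0 x). exists 1. split; auto; lra. exists (-1). split; auto.
    destruct (Rtotal_order x 0) as [H|[H|H]]; lra. }
  destruct He0 as [e [He Hex]]. exists e. split; auto. split; auto.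
  assert (Hd : forall y, Rabs (y - x) < Rabs x -> is_derive Fm y (G1 e y) /\ Derive Fm y = G1 e y).
  { intros y Hy. pose proof (loc_pos e x y He Hex Hy) as Hey.
    assert (Hi : is_derive Fm y (G1 e y)).
    { apply is_derive_ext_loc with (G0 e).
      apply loc_ball with (Rabs y). apply (Rabs_pos_e e); auto.
      intros z Hz. symmetry. apply Fm_G0; auto. apply (loc_pos e y z); auto.
      apply G0_deriv. apply (Pf_pos e); auto. }
    split; auto. apply is_derive_unique. auto. }
  split; auto.
  apply is_derive_ext_loc with (G1 e).
  apply loc_ball with (Rabs x). apply (Rabs_pos_e e); auto.
  intros z Hz. symmetry. apply Hd. auto.
  apply G1_deriv. apply (Pf_pos e); auto.
Qed.
Definition dd (n : nat) : R := dco n + unitc 1 n.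
Definition qq := PS_mult eco (invc dd).
Definition cF := PS_mult (idc 0) (sqrtc qq).

Lemma dd0 : dd 0 = 2. Proof. unfold dd, dco, unitc. simpl. field. Qed.
Lemma dd1 : dd 1 = 2. Proof. unfold dd, dco, unitc. simpl. field. Qed.
Lemma dd2 : dd 2 = 2. Proof. unfold dd, dco, unitc. simpl. field. Qed.
Lemma eco0 : eco 0 = 2. Proof. unfold eco, dco. simpl. field. Qed.
Lemma eco1 : eco 1 = 2. Proof. unfold eco, dco. simpl. field. Qed.
Lemma eco2 : eco 2 = 4/3. Proof. unfold eco, dco. simpl. field. Qed.

Lemma i0 : invc dd 0 = 1/2.
Proof. rewrite invc_eq. cbv beta iota delta [inv_step]. rewrite dd0. field. Qed.
Lemma i1 : invc dd 1 = -1/2.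
Proof.
  rewrite invc_eq. cbv beta iota delta [inv_step]. cbn [sum_f_R0 tl Nat.sub].
  rewrite dd0, dd1, i0. field.
Qed.
Lemma i2 : invc dd 2 = 0.
Proof.
  rewrite invc_eq. cbv beta iota delta [inv_step]. cbn [sum_f_R0 tl Nat.sub].
  rewrite dd0, dd1, dd2, i0, i1. field.
Qed.

Lemma q0 : qq 0 = 1.
Proof. unfold qq, PS_mult. cbn [sum_f_R0 Nat.sub]. rewrite eco0, i0. field. Qed.
Lemma q1 : qq 1 = 0.
Proof. unfold qq, PS_mult. cbn [sum_f_R0 Nat.sub]. rewrite eco0, eco1, i0, i1. field. Qed.
Lemma q2 : qq 2 = -1/3.
Proof. unfold qq, PS_mult. cbn [sum_f_R0 Nat.sub]. rewrite eco0, eco1, eco2, i0, i1, i2. field. Qed.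

Lemma s0 : sqrtc qq 0 = 1.
Proof. rewrite sqrtc_eq. cbv beta iota delta [sqrt_step]. rewrite q0. apply sqrt_1. Qed.
Lemma s1 : sqrtc qq 1 = 0.
Proof.
  rewrite sqrtc_eq. cbv beta iota delta [sqrt_step]. cbn [sum_f_R0 tl Nat.sub].
  rewrite q0, q1, sqrt_1. field.
Qed.
Lemma s2 : sqrtc qq 2 = -1/6.
Proof.
  rewrite sqrtc_eq. cbv beta iota delta [sqrt_step]. cbn [sum_f_R0 tl Nat.sub].
  rewrite q0, q2, s1, sqrt_1. field.
Qed.

Lemma c1 : cF 1 = 1.
Proof. unfold cF, PS_mult. cbn [sum_f_R0 Nat.sub idc]. rewrite s0. ring. Qed.
Lemma c2 : cF 2 = 0.
Proof. unfold cF, PS_mult. cbn [sum_f_R0 Nat.sub idc]. rewrite s1. ring. Qed.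
Lemma c3 : cF 3 = -1/6.
Proof. unfold cF, PS_mult. cbn [sum_f_R0 Nat.sub idc]. rewrite s2. ring. Qed.

Lemma anc_F0 : anc Fm 0 cF.
Proof.
  assert (HD : anc (fun y => exp (2 * y) + 1) 0 dd).
  { eapply anc_coef_ext. apply an_plus. apply an_exp2. apply (an_const 1).
    intro n. unfold dd. rewrite Rmult_0_r, exp_0, Rmult_1_l. reflexivity. }
  assert (HE : anc Es 0 eco).
  { apply an_mk with 2 2 1; try lra. apply eco_bound. intros y _. rewrite Rminus_0_r. reflexivity. }
  assert (HQ : anc Qf 0 qq).
  { eapply an_ext with (d := 1). lra.
    2: { apply an_mult. apply HE. apply an_inv. apply HD.
         pose proof (exp_pos (2 * 0)). lra. }
    intros y _. reflexivity. }
  eapply an_ext with (d := 1). lra.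
  2: { apply an_mult. apply an_id. apply an_sqrt. apply HQ. apply Qf_pos. }
  intros y _. reflexivity.
Qed.
Lemma F0_facts : locally 0 (fun y => PSeries cF y = Fm y) /\ Rbar_lt 0 (CV_radius cF).
Proof.
  destruct anc_F0 as [M [K [HK [Hb Hf]]]].
  split.
  - apply loc_ball with (/ K). apply Rinv_0_lt_compat; auto.
    intros y Hy. rewrite Hf by auto. rewrite Rminus_0_r. reflexivity.
  - rewrite <- Rabs_R0. apply rad_bound with M K; auto. rewrite Rabs_R0. apply Rinv_0_lt_compat; auto.
Qed.

Lemma Dn_F0 n : Derive_n Fm n 0 = cF n * INR (Factorial.fact n).
Proof.
  destruct F0_facts as [Hl Hr].
  rewrite <- Derive_n_coef by auto. apply Derive_n_ext_loc.
  destruct Hl as [eps Heps]. exists eps. intros y Hy. symmetry. apply Heps. auto.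
Qed.

Lemma exn_F0 n : ex_derive_n Fm n 0.
Proof.
  destruct F0_facts as [Hl Hr].
  apply ex_derive_n_ext_loc with (PSeries cF). auto.
  apply ex_derive_n_PSeries. rewrite Rabs_R0. auto.
Qed.

Lemma ex_D1 x : ex_derive Fm x.
Proof.
  destruct (Req_dec x 0) as [H|H].
  - subst. exact (exn_F0 1).
  - destruct (Fm_nz x H) as [e [He [Hex [Hd _]]]].
    destruct (Hd x) as [Hi _]. rewrite Rminus_diag, Rabs_R0. apply Rabs_pos_lt; auto.
    exists (G1 e x). auto.
Qed.

Lemma ex_D2 x : ex_derive (Derive Fm) x.
Proof.
  destruct (Req_dec x 0) as [H|H].
  - subst. exact (exn_F0 2).
  - destruct (Fm_nz x H) as [e [He [Hex [_ Hd]]]].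
    exists (G2 e x). auto.
Qed.

Lemma D1_pos x : 0 < Derive Fm x.
Proof.
  destruct (Req_dec x 0) as [H|H].
  - subst. change (Derive Fm 0) with (Derive_n Fm 1 0). rewrite Dn_F0, c1. simpl. lra.
  - destruct (Fm_nz x H) as [e [He [Hex [Hd _]]]].
    destruct (Hd x) as [_ HD]. rewrite Rminus_diag, Rabs_R0. apply Rabs_pos_lt; auto.
    rewrite HD. apply G1_pos; auto.
Qed.

Lemma D2_val x : x <> 0 -> exists e, (e = 1 \/ e = -1) /\ 0 < e * x /\ Derive_n Fm 2 x = G2 e x.
Proof.
  intros H. destruct (Fm_nz x H) as [e [He [Hex [_ Hd]]]].
  exists e. split; auto. split; auto. apply is_derive_unique. exact Hd.
Qed.

Lemma D2_nonpos x : 0 <= x -> Derive_n Fm 2 x <= 0.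
Proof.
  intros Hx. destruct (Req_dec x 0) as [H|H].
  - subst. rewrite Dn_F0, c2. lra.
  - destruct (D2_val x H) as [e [He [Hex HD]]]. rewrite HD.
    pose proof (G2_sign e x He Hex).
    destruct He as [-> | ->]. lra. lra.
Qed.

Lemma D2_zero x : Derive_n Fm 2 x = 0 <-> x = 0.
Proof.
  split.
  - intros H0. destruct (Req_dec x 0) as [H|H]; auto.
    destruct (D2_val x H) as [e [He [Hex HD]]]. rewrite HD in H0.
    pose proof (G2_sign e x He Hex). rewrite H0 in H1. lra.
  - intros ->. rewrite Dn_F0, c2. lra.
Qed.

Lemma D3_0 : Derive_n Fm 3 0 <> 0.
Proof. rewrite Dn_F0, c3. simpl. lra. Qed.
Lemma cont_F x : continuity_pt Fm x.
Proof. apply derivable_continuous_pt, ex_derive_Reals_0, ex_D1. Qed.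

Lemma cont_D x : continuity_pt (Derive Fm) x.
Proof. apply derivable_continuous_pt, ex_derive_Reals_0, ex_D2. Qed.

Lemma Fm_incr x y : x < y -> Fm x < Fm y.
Proof.
  intros Hxy.
  destruct (MVT_gen Fm x y (Derive Fm)) as [c [Hc E]].
  - intros z _. apply Derive_correct, ex_D1.
  - intros z _. apply cont_F.
  - pose proof (D1_pos c). assert (0 < Derive Fm c * (y - x)) by (apply Rmult_lt_0_compat; lra). lra.
Qed.

Lemma D_mono a b : 0 <= a -> a <= b -> Derive Fm b <= Derive Fm a.
Proof.
  intros Ha Hab.
  destruct (MVT_gen (Derive Fm) a b (Derive (Derive Fm))) as [c [Hc E]].
  - intros z _. apply Derive_correct, ex_D2.
  - intros z _. apply cont_D.
  - rewrite Rmin_left, Rmax_right in Hc by auto.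
    assert (H2 : Derive (Derive Fm) c <= 0) by (apply (D2_nonpos c); lra).
    assert (Derive (Derive Fm) c * (b - a) <= 0) by nra.
    lra.
Qed.

Lemma conc_aux x y t : 0 <= x -> x <= y -> 0 <= t <= 1 ->
  t * Fm x + (1 - t) * Fm y <= Fm (t * x + (1 - t) * y).
Proof.
  intros Hx Hxy Ht.
  set (z := t * x + (1 - t) * y).
  assert (Hzx : z - x = (1 - t) * (y - x)) by (unfold z; ring).
  assert (Hyz : y - z = t * (y - x)) by (unfold z; ring).
  assert (Hxz : x <= z) by nra.
  assert (Hzy : z <= y) by nra.
  destruct (MVT_gen Fm x z (Derive Fm)) as [c1 [Hc1 E1]].
  { intros w _. apply Derive_correct, ex_D1. }
  { intros w _. apply cont_F. }
  destruct (MVT_gen Fm z y (Derive Fm)) as [c2 [Hc2 E2]].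
  { intros w _. apply Derive_correct, ex_D1. }
  { intros w _. apply cont_F. }
  rewrite Rmin_left, Rmax_right in Hc1 by auto.
  rewrite Rmin_left, Rmax_right in Hc2 by auto.
  assert (Hm : Derive Fm c2 <= Derive Fm c1) by (apply D_mono; lra).
  assert (Hg : Fm z - (t * Fm x + (1 - t) * Fm y) = t * (1 - t) * (y - x) * (Derive Fm c1 - Derive Fm c2)).
  { replace (Fm x) with (Fm z - Derive Fm c1 * (z - x)) by lra.
    replace (Fm y) with (Fm z + Derive Fm c2 * (y - z)) by lra.
    rewrite Hzx, Hyz. ring. }
  assert (0 <= t * (1 - t) * (y - x)).
  { apply Rmult_le_pos. apply Rmult_le_pos; lra. lra. }
  assert (0 <= t * (1 - t) * (y - x) * (Derive Fm c1 - Derive Fm c2)) by (apply Rmult_le_pos; lra).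
  lra.
Qed.

Lemma Fm_concave : concave_on (fun r => 0 <= r) Fm.
Proof.
  intros x y t Hx Hy Ht.
  destruct (Rle_dec x y) as [H|H].
  - apply conc_aux; auto.
  - replace (t * x + (1 - t) * y) with ((1 - t) * y + (1 - (1 - t)) * x) by ring.
    replace (t * Fm x + (1 - t) * Fm y) with ((1 - t) * Fm y + (1 - (1 - t)) * Fm x) by ring.
    apply conc_aux; auto; lra.
Qed.

Theorem lemma3p2 :
  concave_on (fun r => 0 <= r) g /\
  exists F : R -> R,
    (forall r : R, 0 <= r -> F r = g r) /\
    real_analytic F /\
    (forall x y : R, x < y -> F x < F y) /\
    (forall x : R, F (- x) = - F x) /\
    (forall x : R, Derive F x <> 0) /\
    (forall x : R, Derive_n F 2 x = 0 <-> x = 0) /\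
    Derive_n F 3 0 <> 0.
Proof.
  split.
  - intros x y t Hx Hy Ht.
    assert (0 <= t * x + (1 - t) * y) by nra.
    rewrite <- !Fm_g by auto. apply Fm_concave; auto.
  - exists Fm. split. apply Fm_g. split. apply Fm_analytic.
    split. apply Fm_incr. split. apply Fm_odd.
    split. intro x. pose proof (D1_pos x). lra.
    split. apply D2_zero. apply D3_0.
Qed.
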